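(* Fix $p\in(0,1)$ and let $P_n$ be the number of distinct directed source-to-sink paths in a random series-parallel network of size $n$ in the Bernoulli model with parameter $p$. Then $\mathbb{E}(P_1)=1$ and for $n\ge2$ $$\mathbb{E}(P_n)=\frac{2p}{n-1}\sum_{k=1}^{n-1}\mathbb{E}(P_k)+\frac{1-p}{n-1}\sum_{k=1}^{n-1}\mathbb{E}(P_k)\mathbb{E}(P_{n-k}),$$ and the generating function $E(z)=\sum_{n\ge1}\mathbb{E}(P_n)z^{n-1}$ is $$E(z)=\begin{cases}\dfrac{1-2p}{(1-p)(1-z)-p(1-z)^{2p}}, & p\neq\tfrac12,\\[2mm] \dfrac{2}{2(1-z)-(1-z)\log\frac{1}{1-z}}, & p=\tfrac12.\end{cases}$$
   Context: Bernoulli model of series-parallel networks with parameter $p\in(0,1)$: at step $1$ the network is a single edge from the source to the sink; at step $n>1$ one of the $n-1$ edges $(x,y)$ is chosen uniformly at random and with probability $p$ a parallel edge $(x,y)$ is added, with probability $1-p$ the edge is subdivided by a new vertex $z$ into $(x,z),(z,y)$. Size $n$ means the network after step $n$ ($n$ edges). Paths are directed paths following edge orientation (towards the sink). *)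

(* Defs.v *)
From Stdlib Require Import Reals List Arith.
Import ListNotations.
Open Scope R_scope.

(* A network is a list of directed edges (x,y) (a multigraph; order irrelevant).
   Source = vertex 0, sink = vertex 1.  The vertex created at step m gets label m. *)
Definition network := list (nat * nat).

Definition net1 : network := [(0%nat, 1%nat)].

Definition grow (g : network) (k : nat) (par : bool) (z : nat) : network :=
  let e := nth k g (0%nat, 1%nat) in
  if par then e :: g
  else (fst e, z) :: (z, snd e) :: (firstn k g ++ skipn (S k) g).

(* Exact distribution of the network of size m+1: list of (probability, network). *)
Fixpoint netdist (p : R) (m : nat) : list (R * network) :=
  match m with
  | O => [(1, net1)]
  | S m' =>
      flat_map (fun qg : R * network =>
        let (q, g) := qg in
        flat_map (fun k : nat =>
          [ (q * / INR (S m') * p, grow g k true (S (S m')));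
            (q * / INR (S m') * (1 - p), grow g k false (S (S m'))) ])
          (seq 0 (S m')))
        (netdist p m')
  end.

(* Number of directed paths from v to the sink (vertex 1) using at most fuel edges;
   parallel edges yield distinct paths. *)
Fixpoint npaths (fuel : nat) (v : nat) (g : network) : nat :=
  if Nat.eqb v 1 then 1%nat else
  match fuel with
  | O => 0%nat
  | S f => fold_right (fun e acc =>
             if Nat.eqb (fst e) v then (npaths f (snd e) g + acc)%nat else acc) 0%nat g
  end.

(* Number of source-to-sink paths (a path uses at most |g| edges). *)
Definition P (g : network) : nat := npaths (length g) 0 g.

(* E(P_n) for n >= 1 (size-n network is netdist p (n-1)). *)
Definition EP (p : R) (n : nat) : R :=
  fold_right (fun qg acc => fst qg * INR (P (snd qg)) + acc) 0 (netdist p (n - 1)).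

Definition Egf (p z : R) : R :=
  if Req_EM_T p (1/2) then
    2 / (2 * (1 - z) - (1 - z) * ln (1 / (1 - z)))
  else
    (1 - 2 * p) / ((1 - p) * (1 - z) - p * Rpower (1 - z) (2 * p)).

(* Main.v *)
Require Import Defs.
From Stdlib Require Import Reals List Arith Lia Lra Permutation.
Import ListNotations.
Open Scope R_scope.

Definition Ex {X : Type} (D : list (R * X)) (f : X -> R) : R :=
  fold_right (fun qg acc => fst qg * f (snd qg) + acc) 0 D.

Definition lsum (l : list nat) (f : nat -> R) : R :=
  fold_right (fun k acc => f k + acc) 0 l.

Lemma Ex_app {X} (D1 D2 : list (R*X)) f : Ex (D1 ++ D2) f = Ex D1 f + Ex D2 f.
Proof. induction D1 as [|x D1 IH]; simpl; [ring| rewrite IH; ring]. Qed.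

Lemma Ex_ext {X} (D : list (R*X)) f g :
  (forall qx, In qx D -> f (snd qx) = g (snd qx)) -> Ex D f = Ex D g.
Proof.
  induction D as [|x D IH]; intros H; simpl; [reflexivity|].
  rewrite H by (left; reflexivity). rewrite IH; [reflexivity|].
  intros; apply H; right; assumption.
Qed.

Lemma Ex_plus {X} (D : list (R*X)) f g :
  Ex D (fun x => f x + g x) = Ex D f + Ex D g.
Proof. induction D as [|x D IH]; simpl; [ring| rewrite IH; ring]. Qed.

Lemma Ex_scal {X} (D : list (R*X)) c f :
  Ex D (fun x => c * f x) = c * Ex D f.
Proof. induction D as [|x D IH]; simpl; [ring| rewrite IH; ring]. Qed.

Lemma Ex_swap {X Y} (D1 : list (R*X)) (D2 : list (R*Y)) f :
  Ex D1 (fun a => Ex D2 (fun b => f a b)) = Ex D2 (fun b => Ex D1 (fun a => f a b)).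
Proof.
  induction D1 as [|x D1 IH]; simpl.
  - induction D2 as [|y D2 IH2]; simpl; [reflexivity| rewrite <- IH2; ring].
  - rewrite IH. rewrite <- Ex_scal. rewrite <- Ex_plus. reflexivity.
Qed.

Lemma lsum_app l1 l2 f : lsum (l1 ++ l2) f = lsum l1 f + lsum l2 f.
Proof. induction l1 as [|x l1 IH]; simpl; [ring| rewrite IH; ring]. Qed.

Lemma lsum_ext l f g : (forall k, In k l -> f k = g k) -> lsum l f = lsum l g.
Proof.
  induction l as [|x l IH]; intros H; simpl; [reflexivity|].
  rewrite H by (left; reflexivity). rewrite IH; [reflexivity|].
  intros; apply H; right; assumption.
Qed.

Lemma lsum_plus l f g : lsum l (fun k => f k + g k) = lsum l f + lsum l g.
Proof. induction l as [|x l IH]; simpl; [ring| rewrite IH; ring]. Qed.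

Lemma lsum_scal l c f : lsum l (fun k => c * f k) = c * lsum l f.
Proof. induction l as [|x l IH]; simpl; [ring| rewrite IH; ring]. Qed.

Lemma lsum_map l g f : lsum (map g l) f = lsum l (fun k => f (g k)).
Proof. induction l as [|x l IH]; simpl; [ring| rewrite IH; ring]. Qed.

Lemma lsum_perm l l' f : Permutation l l' -> lsum l f = lsum l' f.
Proof.
  induction 1; simpl.
  - reflexivity.
  - rewrite IHPermutation; ring.
  - ring.
  - congruence.
Qed.

Lemma lsum_seqS n f : lsum (seq 0 (S n)) f = lsum (seq 0 n) f + f n.
Proof. rewrite seq_S, lsum_app. simpl. ring. Qed.

Lemma lsum_seq_shift s n f : lsum (seq (S s) n) f = lsum (seq s n) (fun k => f (S k)).
Proof. rewrite <- seq_shift, lsum_map. reflexivity. Qed.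

Lemma lsum_seq_first n f : lsum (seq 0 (S n)) f = f 0%nat + lsum (seq 0 n) (fun k => f (S k)).
Proof. simpl. rewrite lsum_seq_shift. reflexivity. Qed.

Lemma lsum_reflect n f : lsum (seq 0 n) (fun k => f (n - 1 - k)%nat) = lsum (seq 0 n) f.
Proof.
  induction n as [|n IH]; [reflexivity|].
  rewrite lsum_seq_first, lsum_seqS.
  replace (S n - 1 - 0)%nat with n by lia.
  rewrite <- IH.
  rewrite (lsum_ext _ (fun k => f (S n - 1 - S k)%nat) (fun k => f (n - 1 - k)%nat)).
  - ring.
  - intros k _. f_equal. lia.
Qed.

Lemma Ex_flat_pair {Y} (l : list nat) (a b : nat -> R) (A B : nat -> Y) F :
  Ex (flat_map (fun k => [(a k, A k); (b k, B k)]) l) F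
  = lsum l (fun k => a k * F (A k) + b k * F (B k)).
Proof.
  induction l as [|x l IH]; simpl; [reflexivity|]. rewrite IH. ring.
Qed.

Inductive tr := Lf | Pr (a b : tr) | Sr (a b : tr).

Fixpoint tsize (t : tr) : nat :=
  match t with Lf => 1%nat | Pr a b => (tsize a + tsize b)%nat | Sr a b => (tsize a + tsize b)%nat end.

Fixpoint tvaln (t : tr) : nat :=
  match t with Lf => 1%nat | Pr a b => (tvaln a + tvaln b)%nat | Sr a b => (tvaln a * tvaln b)%nat end.

Fixpoint tgrow (t : tr) (j : nat) (b : bool) : tr :=
  match t with
  | Lf => if b then Pr Lf Lf else Sr Lf Lf
  | Pr u v => if Nat.ltb j (tsize u) then Pr (tgrow u j b) v else Pr u (tgrow v (j - tsize u) b)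
  | Sr u v => if Nat.ltb j (tsize u) then Sr (tgrow u j b) v else Sr u (tgrow v (j - tsize u) b)
  end.

Lemma tsize_grow t j b : tsize (tgrow t j b) = S (tsize t).
Proof.
  revert j; induction t as [|u IHu v IHv|u IHu v IHv]; intros j; simpl.
  - destruct b; reflexivity.
  - destruct (Nat.ltb j (tsize u)); simpl; [rewrite IHu| rewrite IHv]; lia.
  - destruct (Nat.ltb j (tsize u)); simpl; [rewrite IHu| rewrite IHv]; lia.
Qed.

Fixpoint tdist (p : R) (m : nat) : list (R * tr) :=
  match m with
  | O => [(1, Lf)]
  | S m' =>
      flat_map (fun qt : R * tr =>
        let (q, t) := qt in
        flat_map (fun k : nat =>
          [ (q * / INR (S m') * p, tgrow t k true);
            (q * / INR (S m') * (1 - p), tgrow t k false) ])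
          (seq 0 (S m')))
        (tdist p m')
  end.

Definition W (p : R) (n : nat) (F : tr -> R) (t : tr) : R :=
  / INR n * lsum (seq 0 n) (fun k => p * F (tgrow t k true) + (1 - p) * F (tgrow t k false)).

Lemma Ex_flat_map {X Y} (D : list (R*X)) (K : R -> X -> list (R*Y)) F G :
  (forall q x, Ex (K q x) F = q * G x) ->
  Ex (flat_map (fun qx : R * X => let (q, x) := qx in K q x) D) F = Ex D G.
Proof.
  intros H. induction D as [|[q x] D IH]; [reflexivity|].
  change (Ex (K q x ++ flat_map (fun qx : R * X => let (q, x) := qx in K q x) D) F = q * G x + Ex D G).
  rewrite Ex_app, IH, H. reflexivity.
Qed.

Lemma Ex_tdist_S p m F : Ex (tdist p (S m)) F = Ex (tdist p m) (W p (S m) F).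
Proof.
  change (tdist p (S m)) with (flat_map (fun qt : R * tr =>
        let (q, t) := qt in
        (fun q t => flat_map (fun k : nat =>
          [ (q * / INR (S m) * p, tgrow t k true);
            (q * / INR (S m) * (1 - p), tgrow t k false) ])
          (seq 0 (S m))) q t) (tdist p m)).
  apply Ex_flat_map. intros q t.
  rewrite Ex_flat_pair. unfold W.
  rewrite <- lsum_scal, <- lsum_scal. apply lsum_ext. intros; ring.
Qed.

Lemma tdist_size p m : forall qt, In qt (tdist p m) -> tsize (snd qt) = S m.
Proof.
  induction m as [|m IH]; intros qt H.
  - simpl in H. destruct H as [<-|[]]; reflexivity.
  - apply in_flat_map in H. destruct H as [[q t] [Ht H]].
    apply in_flat_map in H. destruct H as [k [_ H]].
    apply IH in Ht. simpl in Ht.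
    destruct H as [H|[H|[]]]; subst qt; simpl; rewrite tsize_grow, Ht; reflexivity.
Qed.

Lemma tdist_mass p m : Ex (tdist p m) (fun _ => 1) = 1.
Proof.
  induction m as [|m IH]; [simpl; ring|].
  rewrite Ex_tdist_S. transitivity (Ex (tdist p m) (fun _ => 1)); [|exact IH].
  apply Ex_ext. intros qx _. unfold W.
  rewrite (lsum_ext _ _ (fun _ => 1)) by (intros; ring).
  assert (lsum (seq 0 (S m)) (fun _ => 1) = INR (S m)).
  { clear. induction m as [|m IH]; [simpl; ring|].
    rewrite lsum_seqS, IH. rewrite (S_INR (S m)). ring. }
  rewrite H. field. apply not_0_INR. lia.
Qed.

Definition B2 p k l (G : tr -> tr -> R) :=
  Ex (tdist p k) (fun a => Ex (tdist p l) (fun b => G a b)).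
Definition HH p (F : tr -> R) a b := p * F (Pr a b) + (1 - p) * F (Sr a b).

Lemma lsum_comb l c d f g : lsum l (fun j => c * f j + d * g j) = c * lsum l f + d * lsum l g.
Proof. rewrite lsum_plus, lsum_scal, lsum_scal. reflexivity. Qed.

Lemma lsum_seq_off s n f : lsum (seq s n) f = lsum (seq 0 n) (fun j => f (s + j)%nat).
Proof.
  revert f; induction s as [|s IH]; intros f; [reflexivity|].
  rewrite lsum_seq_shift, IH. reflexivity.
Qed.

Lemma lsum_split k l f : lsum (seq 0 (k + l)) f = lsum (seq 0 k) f + lsum (seq 0 l) (fun j => f (k + j)%nat).
Proof. rewrite seq_app, lsum_app, (lsum_seq_off (0 + k)). reflexivity. Qed.

Lemma grow_left (C : tr -> tr -> tr) a b j bb :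
  (C = Pr \/ C = Sr) -> (j < tsize a)%nat -> tgrow (C a b) j bb = C (tgrow a j bb) b.
Proof.
  intros [-> | ->] Hj; simpl; apply Nat.ltb_lt in Hj; rewrite Hj; reflexivity.
Qed.

Lemma grow_right (C : tr -> tr -> tr) a b j bb :
  (C = Pr \/ C = Sr) -> tgrow (C a b) (tsize a + j) bb = C a (tgrow b j bb).
Proof.
  intros [-> | ->]; simpl;
  (replace (Nat.ltb (tsize a + j) (tsize a)) with false by (symmetry; apply Nat.ltb_ge; lia));
  replace (tsize a + j - tsize a)%nat with j by lia; reflexivity.
Qed.

Lemma W_split p F C a b :
  (C = Pr \/ C = Sr) ->
  W p (tsize a + tsize b) F (C a b) =
  / INR (tsize a + tsize b) *
    (lsum (seq 0 (tsize a)) (fun j => p * F (C (tgrow a j true) b) + (1 - p) * F (C (tgrow a j false) b))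
   + lsum (seq 0 (tsize b)) (fun j => p * F (C a (tgrow b j true)) + (1 - p) * F (C a (tgrow b j false)))).
Proof.
  intros HC. unfold W. rewrite lsum_split. f_equal. f_equal.
  - apply lsum_ext. intros j Hj. apply in_seq in Hj.
    rewrite !grow_left; auto; lia.
  - apply lsum_ext. intros j _. rewrite !grow_right by auto. reflexivity.
Qed.

Lemma tsize_pos t : (0 < tsize t)%nat.
Proof. induction t; simpl; lia. Qed.

Lemma HW p F a b :
  HH p (W p (tsize a + tsize b) F) a b =
  / INR (tsize a + tsize b) *
   (INR (tsize a) * W p (tsize a) (fun a' => HH p F a' b) a
  + INR (tsize b) * W p (tsize b) (fun b' => HH p F a b') b).
Proof.
  assert (Ha : INR (tsize a) <> 0) by (apply not_0_INR; pose proof (tsize_pos a); lia).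
  assert (Hb : INR (tsize b) <> 0) by (apply not_0_INR; pose proof (tsize_pos b); lia).
  unfold HH at 1. rewrite !W_split by auto.
  unfold W, HH.
  rewrite (lsum_ext _ (fun k => p * (p * F (Pr (tgrow a k true) b) + (1 - p) * F (Sr (tgrow a k true) b)) +
     (1 - p) * (p * F (Pr (tgrow a k false) b) + (1 - p) * F (Sr (tgrow a k false) b)))
     (fun k => p * (p * F (Pr (tgrow a k true) b) + (1 - p) * F (Pr (tgrow a k false) b)) +
     (1 - p) * (p * F (Sr (tgrow a k true) b) + (1 - p) * F (Sr (tgrow a k false) b))))
    by (intros; ring).
  rewrite (lsum_ext _ (fun k => p * (p * F (Pr a (tgrow b k true)) + (1 - p) * F (Sr a (tgrow b k true))) +
     (1 - p) * (p * F (Pr a (tgrow b k false)) + (1 - p) * F (Sr a (tgrow b k false))))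
     (fun k => p * (p * F (Pr a (tgrow b k true)) + (1 - p) * F (Pr a (tgrow b k false))) +
     (1 - p) * (p * F (Sr a (tgrow b k true)) + (1 - p) * F (Sr a (tgrow b k false)))))
    by (intros; ring).
  assert (Hab : INR (tsize a) + INR (tsize b) <> 0).
  { apply Rgt_not_eq. apply Rplus_lt_0_compat; apply lt_0_INR; apply tsize_pos. }
  rewrite !lsum_comb. rewrite plus_INR. field. repeat split; auto.
Qed.

Lemma comb_sum n (beta : nat -> R) :
  lsum (seq 0 n) (fun k => INR (S k) * beta (S k)) + lsum (seq 0 n) (fun k => INR (n - k) * beta k)
  = INR n * lsum (seq 0 (S n)) beta.
Proof.
  induction n as [|n IH]; [simpl; ring|].
  rewrite (lsum_ext (seq 0 (S n)) (fun k => INR (S n - k) * beta k)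
             (fun k => INR (n - k) * beta k + beta k)).
  2:{ intros k Hk. apply in_seq in Hk. replace (S n - k)%nat with (S (n - k)) by lia.
      rewrite S_INR. ring. }
  rewrite lsum_plus. rewrite (lsum_seqS (S n) beta).
  rewrite (lsum_seqS n (fun k => INR (S k) * beta (S k))).
  rewrite (lsum_seqS n (fun k => INR (n - k) * beta k)).
  replace (n - n)%nat with 0%nat by lia.
  replace (lsum (seq 0 n) (fun k => INR (S k) * beta (S k)) + INR (S n) * beta (S n) +
    (lsum (seq 0 n) (fun k => INR (n - k) * beta k) + INR 0 * beta n + lsum (seq 0 (S n)) beta))
   with ((lsum (seq 0 n) (fun k => INR (S k) * beta (S k)) + lsum (seq 0 n) (fun k => INR (n - k) * beta k))
          + INR (S n) * beta (S n) + INR 0 * beta n + lsum (seq 0 (S n)) beta) by ring.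
  rewrite IH. rewrite (S_INR n). simpl (INR 0). ring.
Qed.

Lemma Dec p n F :
  Ex (tdist p (S n)) F = / INR (S n) * lsum (seq 0 (S n)) (fun k => B2 p k (n - k) (HH p F)).
Proof.
  revert F; induction n as [|n IH]; intros F.
  - rewrite Ex_tdist_S. unfold W, B2, HH. simpl. field.
  - rewrite Ex_tdist_S, IH.
    set (beta := fun k => B2 p k (S n - k) (HH p F)).
    rewrite (lsum_ext _ _ (fun k => / INR (S (S n)) * (INR (S k) * beta (S k) + INR (S n - k) * beta k))).
    2:{ intros k Hk. apply in_seq in Hk. unfold B2.
        transitivity (Ex (tdist p k) (fun a => Ex (tdist p (n - k)) (fun b =>
           / INR (S (S n)) * (INR (S k) * W p (S k) (fun a' => HH p F a' b) a
           + INR (S (n - k)) * W p (S (n - k)) (fun b' => HH p F a b') b)))).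
        { apply Ex_ext. intros [qa a] Ha. apply tdist_size in Ha. cbn [snd] in Ha |- *.
          apply Ex_ext. intros [qb b] Hb. apply tdist_size in Hb. cbn [snd] in Hb |- *.
          replace (S (S n)) with (tsize a + tsize b)%nat by lia.
          rewrite HW, Ha, Hb. replace (S k + S (n - k))%nat with (S (S n)) by lia. reflexivity. }
        rewrite (Ex_ext _ _ (fun a => / INR (S (S n)) * (INR (S k) *
             Ex (tdist p (n - k)) (fun b => W p (S k) (fun a' => HH p F a' b) a)
           + INR (S (n - k)) * Ex (tdist p (n - k)) (fun b => W p (S (n - k)) (fun b' => HH p F a b') b)))).
        2:{ intros qa _. rewrite Ex_scal, Ex_plus, Ex_scal, Ex_scal. reflexivity. }
        rewrite Ex_scal, Ex_plus, Ex_scal, Ex_scal.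
        rewrite Ex_swap, (Ex_ext (tdist p (n - k)) _ (fun b => Ex (tdist p (S k)) (fun a' => HH p F a' b))).
        2:{ intros qb _. rewrite Ex_tdist_S. reflexivity. }
        rewrite Ex_swap.
        rewrite (Ex_ext (tdist p k) _ (fun a => Ex (tdist p (S (n - k))) (fun b' => HH p F a b'))).
        2:{ intros qa _. rewrite Ex_tdist_S. reflexivity. }
        unfold beta, B2. replace (S n - S k)%nat with (n - k)%nat by lia.
        replace (S n - k)%nat with (S (n - k)) by lia. reflexivity. }
    rewrite lsum_scal, lsum_plus, comb_sum.
    field. split; apply not_0_INR; lia.
Qed.

Definition tv (t : tr) : R := INR (tvaln t).
Definition ee p m := Ex (tdist p m) tv.

Lemma B2_tv p k l : B2 p k l (HH p tv) = p * (ee p k + ee p l) + (1 - p) * (ee p k * ee p l).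
Proof.
  unfold B2, HH, ee.
  rewrite (Ex_ext (tdist p k) _ (fun a => (p * tv a) * Ex (tdist p l) (fun _ => 1)
        + p * Ex (tdist p l) tv + ((1 - p) * tv a) * Ex (tdist p l) tv)).
  2:{ intros [qa a] _. cbn [snd]. rewrite <- !Ex_scal, <- !Ex_plus. apply Ex_ext.
      intros [qb b] _. unfold tv. cbn [snd tvaln]. rewrite plus_INR, mult_INR. ring. }
  rewrite tdist_mass.
  rewrite (Ex_ext (tdist p k) _ (fun a => (p + (1 - p) * Ex (tdist p l) tv) * tv a
        + p * Ex (tdist p l) tv * 1)) by (intros; ring).
  rewrite Ex_plus, Ex_scal, Ex_scal, tdist_mass. ring.
Qed.

Lemma ee_rec p n :
  ee p (S n) = / INR (S n) * (2 * p * lsum (seq 0 (S n)) (ee p)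
        + (1 - p) * lsum (seq 0 (S n)) (fun k => ee p k * ee p (n - k))).
Proof.
  unfold ee at 1. rewrite Dec.
  rewrite (lsum_ext _ _ (fun k => p * ee p k + p * ee p (S n - 1 - k) + (1 - p) * (ee p k * ee p (n - k)))).
  2:{ intros k _. rewrite B2_tv. replace (S n - 1 - k)%nat with (n - k)%nat by lia. ring. }
  rewrite !lsum_plus, !lsum_scal.
  rewrite (lsum_reflect (S n) (ee p)). ring.
Qed.

Lemma ee_0 p : ee p 0 = 1.
Proof. unfold ee, tv. simpl. ring. Qed.

Local Open Scope nat_scope.

Definition verts (s : network) : list nat := flat_map (fun e => [fst e; snd e]) s.

Inductive Real : tr -> nat -> nat -> network -> Prop :=
| RL x y : x <> y -> Real Lf x y [(x, y)]
| RP a b x y sa sb : Real a x y sa -> Real b x y sb ->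
    (forall v, In v (verts sa) -> In v (verts sb) -> v = x \/ v = y) ->
    Real (Pr a b) x y (sa ++ sb)
| RS a b x z y sa sb : Real a x z sa -> Real b z y sb ->
    (forall v, In v (verts sa) -> In v (verts sb) -> v = z) ->
    Real (Sr a b) x y (sa ++ sb).

Definition Out (h : network) (f v : nat) (s : network) : nat :=
  fold_right (fun e acc => if Nat.eqb (fst e) v then (npaths f (snd e) h + acc)%nat else acc) 0%nat s.

Lemma npaths_S f v h : npaths (S f) v h = if Nat.eqb v 1 then 1%nat else Out h f v h.
Proof. reflexivity. Qed.

Lemma npaths_1 g h : npaths g 1 h = 1%nat.
Proof. destruct g; reflexivity. Qed.

Lemma Out_app h f v s1 s2 : Out h f v (s1 ++ s2) = (Out h f v s1 + Out h f v s2)%nat.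
Proof.
  induction s1 as [|e s1 IH]; simpl; [reflexivity|].
  unfold Out in *. destruct (Nat.eqb (fst e) v); rewrite IH; lia.
Qed.

Lemma Out_notin h f v s : ~ In v (map fst s) -> Out h f v s = 0%nat.
Proof.
  induction s as [|e s IH]; intros H; simpl; [reflexivity|].
  unfold Out in *. simpl in H.
  destruct (Nat.eqb (fst e) v) eqn:E.
  - apply Nat.eqb_eq in E. exfalso; apply H; left; exact E.
  - apply IH. intros Hv; apply H; right; exact Hv.
Qed.

Lemma verts_app s1 s2 v : In v (verts (s1 ++ s2)) <-> In v (verts s1) \/ In v (verts s2).
Proof. unfold verts. rewrite flat_map_app, in_app_iff. tauto. Qed.

Lemma fst_verts v s : In v (map fst s) -> In v (verts s).
Proof.
  unfold verts. intros H. apply in_map_iff in H. destruct H as [e [<- He]].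
  apply in_flat_map. exists e. split; [exact He| left; reflexivity].
Qed.

Lemma verts_incl s1 s2 v : (forall e, In e s1 -> In e s2) -> In v (verts s1) -> In v (verts s2).
Proof.
  unfold verts. intros Hi H. apply in_flat_map in H. destruct H as [e [He Hv]].
  apply in_flat_map. exists e. auto.
Qed.

Lemma Real_props t x y s : Real t x y s ->
  x <> y /\ In x (verts s) /\ In y (verts s) /\ ~ In y (map fst s) /\ length s = tsize t.
Proof.
  induction 1 as [x y Hxy | a b x y sa sb Ra IHa Rb IHb Hd | a b x z y sa sb Ra IHa Rb IHb Hd].
  - simpl. repeat split; auto; intuition.
  - destruct IHa as [Hxy [Hx [Hy [Hs Hl]]]]. destruct IHb as [_ [Hx2 [Hy2 [Hs2 Hl2]]]].
    repeat split; auto.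
    + apply verts_app; auto.
    + apply verts_app; auto.
    + rewrite map_app, in_app_iff. tauto.
    + rewrite length_app; simpl; lia.
  - destruct IHa as [Hxz [Hx [Hz [Hs Hl]]]]. destruct IHb as [Hzy [Hz2 [Hy2 [Hs2 Hl2]]]].
    repeat split.
    + intros ->. apply Hzy. symmetry. apply Hd; auto.
    + apply verts_app; auto.
    + apply verts_app; auto.
    + rewrite map_app, in_app_iff. intros [H|H]; [|tauto].
      apply fst_verts in H. apply Hzy. symmetry. apply Hd; auto.
    + rewrite length_app; simpl; lia.
Qed.

Fixpoint depth (t : tr) : nat :=
  match t with Lf => 1%nat | Pr a b => Nat.max (depth a) (depth b) | Sr a b => (depth a + depth b)%nat end.

Lemma depth_bounds t : (1 <= depth t <= tsize t)%nat.
Proof. induction t; simpl; lia. Qed.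

Lemma Out_main h : forall t x y s, Real t x y s -> forall l r, h = l ++ s ++ r ->
  (forall v, In v (verts s) -> v <> x -> v <> y -> ~ In v (map fst (l ++ r)) /\ v <> 1%nat) ->
  forall K c, (forall g, (K <= g)%nat -> npaths g y h = c) ->
  forall f, (depth t - 1 + K <= f)%nat -> Out h f x s = (tvaln t * c)%nat.
Proof.
  induction 1 as [x y Hxy | a b x y sa sb Ra IHa Rb IHb Hd | a b x z y sa sb Ra IHa Rb IHb Hd];
    intros l r Hh Hint K c Hc f Hf.
  - unfold Out. simpl. rewrite Nat.eqb_refl. rewrite Hc by (simpl in Hf; lia). lia.
  - rewrite Out_app. simpl.
    assert (HA : Out h f x sa = (tvaln a * c)%nat).
    { apply (IHa l (sb ++ r)) with (K := K); [ | | exact Hc | simpl in Hf; lia].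
      + rewrite Hh. rewrite <- !app_assoc. reflexivity.
      + intros v Hv Hvx Hvy. destruct (Hint v) as [H1 H2]; [apply verts_app; auto|auto|auto|].
        split; auto. rewrite !map_app, !in_app_iff. intros [H|[H|H]].
        * apply H1. rewrite map_app, in_app_iff; auto.
        * apply fst_verts in H. destruct (Hd v Hv H); contradiction.
        * apply H1. rewrite map_app, in_app_iff; auto. }
    assert (HB : Out h f x sb = (tvaln b * c)%nat).
    { apply (IHb (l ++ sa) r) with (K := K); [ | | exact Hc | simpl in Hf; lia].
      + rewrite Hh. rewrite <- !app_assoc. reflexivity.
      + intros v Hv Hvx Hvy. destruct (Hint v) as [H1 H2]; [apply verts_app; auto|auto|auto|].
        split; auto. rewrite !map_app, !in_app_iff. intros [[H|H]|H].
        * apply H1. rewrite map_app, in_app_iff; auto.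
        * apply fst_verts in H. destruct (Hd v H Hv); contradiction.
        * apply H1. rewrite map_app, in_app_iff; auto. }
    rewrite HA, HB. lia.
  - destruct (Real_props _ _ _ _ Ra) as [Hxz [Hx [Hz [Hsa _]]]].
    destruct (Real_props _ _ _ _ Rb) as [Hzy [Hz2 [Hy2 [Hsb _]]]].
    assert (Hxsb : ~ In x (verts sb)).
    { intros H. apply Hxz. apply Hd; auto. }
    assert (Hzint : ~ In z (map fst (l ++ r)) /\ z <> 1%nat).
    { apply Hint; [apply verts_app; auto | auto | auto]. }
    destruct (depth_bounds a) as [Hda _]. destruct (depth_bounds b) as [Hdb _].
    assert (Hb : forall g, (depth b - 1 + K <= g)%nat -> Out h g z sb = (tvaln b * c)%nat).
    { intros g Hg. apply (IHb (l ++ sa) r) with (K := K); [ | | exact Hc | lia].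
      - rewrite Hh. rewrite <- !app_assoc. reflexivity.
      - intros v Hv Hvz Hvy.
        assert (Hvsa : ~ In v (verts sa)) by (intros H; apply Hvz; apply Hd; auto).
        destruct (Hint v) as [H1 H2]; [apply verts_app; auto| |auto|].
        { intros ->. contradiction. }
        split; auto. rewrite !map_app, !in_app_iff. intros [[H|H]|H].
        * apply H1. rewrite map_app, in_app_iff; auto.
        * apply fst_verts in H. contradiction.
        * apply H1. rewrite map_app, in_app_iff; auto. }
    rewrite Out_app.
    rewrite (Out_notin h f x sb) by (intros H; apply fst_verts in H; contradiction).
    rewrite (IHa l (sb ++ r) ltac:(rewrite Hh; rewrite <- !app_assoc; reflexivity)
               ) with (K := (depth b + K)%nat) (c := (tvaln b * c)%nat).
    + simpl. lia.
    + intros v Hv Hvx Hvz.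
      assert (Hvsb : ~ In v (verts sb)) by (intros H; apply Hvz; apply Hd; auto).
      destruct (Hint v) as [H1 H2]; [apply verts_app; auto|auto| |].
      { intros ->. contradiction. }
      split; auto. rewrite !map_app, !in_app_iff. intros [H|[H|H]].
      * apply H1. rewrite map_app, in_app_iff; auto.
      * apply fst_verts in H. contradiction.
      * apply H1. rewrite map_app, in_app_iff; auto.
    + intros g Hg. destruct g as [|g]; [lia|].
      rewrite npaths_S. destruct Hzint as [Hz1 Hz1'].
      apply Nat.eqb_neq in Hz1'. rewrite Hz1'.
      rewrite Hh at 2. rewrite !Out_app.
      rewrite (Out_notin h g z l), (Out_notin h g z sa), (Out_notin h g z r); auto.
      * rewrite Hb by lia. lia.
      * intros H; apply Hz1; rewrite map_app, in_app_iff; auto.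
      * intros H; apply Hz1; rewrite map_app, in_app_iff; auto.
    + simpl in Hf. lia.
Qed.

Lemma Real_paths t h : Real t 0 1 h -> npaths (length h) 0 h = tvaln t.
Proof.
  intros R. destruct (Real_props _ _ _ _ R) as [_ [_ [_ [_ Hl]]]].
  destruct (depth_bounds t) as [_ Hd].
  destruct (length h) as [|f] eqn:E; [pose proof (tsize_pos t); lia|].
  rewrite npaths_S. simpl Nat.eqb. cbv iota.
  rewrite (Out_main h t 0 1 h R [] []) with (K := 0%nat) (c := 1%nat).
  - lia.
  - rewrite app_nil_r. reflexivity.
  - intros v _ _ Hv. split; auto.
  - intros g _. apply npaths_1.
  - lia.
Qed.

Local Close Scope nat_scope.
Open Scope R_scope.
Local Open Scope nat_scope.

Definition d0 : nat * nat := (0%nat, 1%nat).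

Definition hgrow (h : network) (j : nat) (b : bool) (z : nat) : network :=
  firstn j h ++ (if b then [nth j h d0; nth j h d0]
                 else [(fst (nth j h d0), z); (z, snd (nth j h d0))]) ++ skipn (S j) h.

Lemma hgrow_app1 s1 s2 j b z : (j < length s1)%nat ->
  hgrow (s1 ++ s2) j b z = hgrow s1 j b z ++ s2.
Proof.
  intros Hj. unfold hgrow.
  rewrite firstn_app, skipn_app, app_nth1 by lia.
  replace (j - length s1)%nat with 0%nat by lia.
  replace (S j - length s1)%nat with 0%nat by lia.
  simpl. rewrite !app_nil_r, <- !app_assoc. reflexivity.
Qed.

Lemma hgrow_app2 s1 s2 j b z : (length s1 <= j)%nat ->
  hgrow (s1 ++ s2) j b z = s1 ++ hgrow s2 (j - length s1) b z.
Proof.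
  intros Hj. unfold hgrow.
  rewrite firstn_app, skipn_app, app_nth2 by lia.
  rewrite firstn_all2 by lia. rewrite (skipn_all2 s1) by lia.
  replace (S j - length s1)%nat with (S (j - length s1)) by lia.
  simpl. rewrite <- !app_assoc. reflexivity.
Qed.

Lemma In_firstn' {A} n (l : list A) e : In e (firstn n l) -> In e l.
Proof. intros H. rewrite <- (firstn_skipn n l). apply in_app_iff. auto. Qed.
Lemma In_skipn' {A} n (l : list A) e : In e (skipn n l) -> In e l.
Proof. intros H. rewrite <- (firstn_skipn n l). apply in_app_iff. auto. Qed.

Lemma verts_hgrow s j b z v : (j < length s)%nat ->
  In v (verts (hgrow s j b z)) -> v = z \/ In v (verts s).
Proof.
  intros Hj H. unfold hgrow in H.
  apply verts_app in H. destruct H as [H|H].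
  { right. eapply verts_incl; [|exact H]. intros e He. eapply In_firstn'; eauto. }
  apply verts_app in H. destruct H as [H|H].
  2:{ right. eapply verts_incl; [|exact H]. intros e He. eapply In_skipn'; eauto. }
  assert (Hn : In (nth j s d0) s) by (apply nth_In; exact Hj).
  assert (Hf : In (fst (nth j s d0)) (verts s)).
  { apply fst_verts. apply in_map. exact Hn. }
  assert (Hs : In (snd (nth j s d0)) (verts s)).
  { unfold verts. apply in_flat_map. exists (nth j s d0). split; [exact Hn| right; left; reflexivity]. }
  destruct b; simpl in H; intuition (subst; auto).
Qed.

Lemma Real_grow t x y s : Real t x y s -> forall j b z, (j < tsize t)%nat -> ~ In z (verts s) ->
  Real (tgrow t j b) x y (hgrow s j b z).
Proof.
  induction 1 as [x y Hxy | a c x y sa sb Ra IHa Rb IHb Hd | a c x w y sa sb Ra IHa Rb IHb Hd];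
    intros j b z Hj Hz.
  - simpl in Hj. assert (j = 0%nat) by lia. subst j.
    assert (Hzx : z <> x) by (intros ->; apply Hz; simpl; auto).
    assert (Hzy : z <> y) by (intros ->; apply Hz; simpl; auto).
    destruct b; simpl.
    + apply (RP Lf Lf x y [(x, y)] [(x, y)]); [constructor; auto|constructor; auto|].
      simpl. intros v [H|[H|[]]] _; subst; auto.
    + apply (RS Lf Lf x z y [(x, z)] [(z, y)]); [constructor; auto|constructor; auto|].
      simpl. intros v [H|[H|[]]] [H'|[H'|[]]]; subst; auto; contradiction.
  - destruct (Real_props _ _ _ _ Ra) as [_ [_ [_ [_ Hla]]]].
    destruct (Real_props _ _ _ _ Rb) as [_ [_ [_ [_ Hlb]]]].
    assert (Hza : ~ In z (verts sa)) by (intros H; apply Hz; apply verts_app; auto).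
    assert (Hzb : ~ In z (verts sb)) by (intros H; apply Hz; apply verts_app; auto).
    simpl in Hj. simpl. destruct (Nat.ltb j (tsize a)) eqn:E.
    + apply Nat.ltb_lt in E. rewrite hgrow_app1 by lia.
      apply RP; auto. intros v Hv Hv2. apply verts_hgrow in Hv; [|lia].
      destruct Hv as [->|Hv]; [contradiction|auto].
    + apply Nat.ltb_ge in E. rewrite hgrow_app2 by lia. rewrite Hla.
      apply RP; auto.
      * apply IHb; auto. simpl in Hj. lia.
      * intros v Hv Hv2. apply verts_hgrow in Hv2; [|lia].
        destruct Hv2 as [->|Hv2]; [contradiction|auto].
  - destruct (Real_props _ _ _ _ Ra) as [_ [_ [_ [_ Hla]]]].
    destruct (Real_props _ _ _ _ Rb) as [_ [_ [_ [_ Hlb]]]].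
    assert (Hza : ~ In z (verts sa)) by (intros H; apply Hz; apply verts_app; auto).
    assert (Hzb : ~ In z (verts sb)) by (intros H; apply Hz; apply verts_app; auto).
    simpl in Hj. simpl. destruct (Nat.ltb j (tsize a)) eqn:E.
    + apply Nat.ltb_lt in E. rewrite hgrow_app1 by lia.
      apply (RS _ _ x w y); auto. intros v Hv Hv2. apply verts_hgrow in Hv; [|lia].
      destruct Hv as [->|Hv]; [contradiction|auto].
    + apply Nat.ltb_ge in E. rewrite hgrow_app2 by lia. rewrite Hla.
      apply (RS _ _ x w y); auto.
      * apply IHb; auto. simpl in Hj. lia.
      * intros v Hv Hv2. apply verts_hgrow in Hv2; [|lia].
        destruct Hv2 as [->|Hv2]; [contradiction|auto].
Qed.

Local Close Scope nat_scope.
Open Scope R_scope.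
Local Open Scope nat_scope.

Definition bump (j l : nat) : nat := if Nat.ltb l j then l else S l.

Definition pupd (pi : list nat) (k j : nat) (b : bool) : list nat :=
  if b then j :: map (bump j) pi
  else j :: S j :: map (bump j) (firstn k pi ++ skipn (S k) pi).

Lemma seq_split j n : (j < n)%nat -> seq 0 n = seq 0 j ++ j :: seq (S j) (n - S j).
Proof.
  intros H. replace n with (j + S (n - S j))%nat at 1 by lia.
  rewrite seq_app. reflexivity.
Qed.

Lemma map_bump_lo j n : (n <= j)%nat -> map (bump j) (seq 0 n) = seq 0 n.
Proof.
  intros H. rewrite <- map_id. apply map_ext_in. intros l Hl. apply in_seq in Hl.
  unfold bump. replace (Nat.ltb l j) with true by (symmetry; apply Nat.ltb_lt; lia). reflexivity.
Qed.

Lemma map_bump_hi j s n : (j <= s)%nat -> map (bump j) (seq s n) = seq (S s) n.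
Proof.
  intros H. rewrite <- seq_shift. apply map_ext_in. intros l Hl. apply in_seq in Hl.
  unfold bump. replace (Nat.ltb l j) with false by (symmetry; apply Nat.ltb_ge; lia). reflexivity.
Qed.

Lemma perm_par j n : (j < n)%nat -> Permutation (j :: map (bump j) (seq 0 n)) (seq 0 (S n)).
Proof.
  intros H. rewrite (seq_split j n H), (seq_split j (S n)) by lia.
  rewrite map_app. simpl. rewrite map_bump_lo, map_bump_hi by lia.
  replace (bump j j) with (S j) by (unfold bump; rewrite Nat.ltb_irrefl; reflexivity).
  replace (n - j)%nat with (S (n - S j)) by lia. simpl.
  apply Permutation_middle.
Qed.

Lemma perm_ser j n rest : (j < n)%nat -> Permutation rest (seq 0 j ++ seq (S j) (n - S j)) ->
  Permutation (j :: S j :: map (bump j) rest) (seq 0 (S n)).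
Proof.
  intros H Hp. rewrite (seq_split j (S n)) by lia.
  replace (S n - S j)%nat with (S (n - S j)) by lia. simpl.
  apply Permutation_map with (f := bump j) in Hp. rewrite map_app in Hp.
  rewrite map_bump_lo, map_bump_hi in Hp by lia.
  eapply perm_trans. { apply perm_skip. apply perm_skip. exact Hp. }
  eapply perm_trans. { apply perm_skip. apply Permutation_middle. }
  apply Permutation_middle.
Qed.

Lemma split_nth {A} (l : list A) k d : (k < length l)%nat ->
  l = firstn k l ++ nth k l d :: skipn (S k) l.
Proof.
  revert k; induction l as [|x l IH]; intros k Hk; simpl in Hk; [lia|].
  destruct k as [|k]; [reflexivity|]. simpl. f_equal. apply IH. lia.
Qed.

Lemma map_nth_seq {A} (l : list A) d : map (fun k => nth k l d) (seq 0 (length l)) = l.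
Proof.
  induction l as [|x l IH]; [reflexivity|].
  simpl. f_equal. rewrite <- seq_shift, map_map. exact IH.
Qed.

Lemma hgrow_nth_j h j b z : (j < length h)%nat ->
  nth j (hgrow h j b z) d0 = if b then nth j h d0 else (fst (nth j h d0), z).
Proof.
  intros Hj. unfold hgrow. rewrite app_nth2; rewrite length_firstn; [|lia].
  replace (j - Nat.min j (length h))%nat with 0%nat by lia. destruct b; reflexivity.
Qed.

Lemma hgrow_nth_Sj h j b z : (j < length h)%nat ->
  nth (S j) (hgrow h j b z) d0 = if b then nth j h d0 else (z, snd (nth j h d0)).
Proof.
  intros Hj. unfold hgrow. rewrite app_nth2; rewrite length_firstn; [|lia].
  replace (S j - Nat.min j (length h))%nat with 1%nat by lia. destruct b; reflexivity.
Qed.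

Lemma hgrow_nth_other h j b z l : (j < length h)%nat -> (l < length h)%nat -> l <> j ->
  nth (bump j l) (hgrow h j b z) d0 = nth l h d0.
Proof.
  intros Hj Hl Hlj. unfold bump, hgrow. destruct (Nat.ltb l j) eqn:E.
  - rewrite app_nth1 by (apply Nat.ltb_lt in E; rewrite length_firstn; lia).
    rewrite nth_firstn. rewrite E. reflexivity.
  - apply Nat.ltb_ge in E. rewrite app_nth2 by (rewrite length_firstn; lia).
    rewrite length_firstn. replace (S l - Nat.min j (length h))%nat with (S (S (l - S j))) by lia.
    destruct b; (transitivity (nth (l - S j) (skipn (S j) h) d0); [reflexivity|]);
      rewrite nth_skipn; f_equal; lia.
Qed.

Local Close Scope nat_scope.
Open Scope R_scope.

Definition st : Type := (network * network * tr * list nat)%type.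
Definition gof (s : st) : network := fst (fst (fst s)).
Definition hof (s : st) : network := snd (fst (fst s)).
Definition tof (s : st) : tr := snd (fst s).
Definition pof (s : st) : list nat := snd s.

Definition cstep (s : st) (k : nat) (b : bool) (z : nat) : st :=
  (grow (gof s) k b z, hgrow (hof s) (nth k (pof s) 0%nat) b z,
   tgrow (tof s) (nth k (pof s) 0%nat) b, pupd (pof s) k (nth k (pof s) 0%nat) b).

Fixpoint cdist (p : R) (m : nat) : list (R * st) :=
  match m with
  | O => [(1, (net1, net1, Lf, [0%nat]))]
  | S m' =>
      flat_map (fun qs : R * st =>
        let (q, s) := qs in
        flat_map (fun k : nat =>
          [ (q * / INR (S m') * p, cstep s k true (S (S m')));
            (q * / INR (S m') * (1 - p), cstep s k false (S (S m'))) ])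
          (seq 0 (S m')))
        (cdist p m')
  end.

Lemma Ex_cdist_S p m F : Ex (cdist p (S m)) F =
  Ex (cdist p m) (fun s => / INR (S m) * lsum (seq 0 (S m))
      (fun k => p * F (cstep s k true (S (S m))) + (1 - p) * F (cstep s k false (S (S m))))).
Proof.
  change (cdist p (S m)) with (flat_map (fun qt : R * st =>
        let (q, t) := qt in
        (fun q t => flat_map (fun k : nat =>
          [ (q * / INR (S m) * p, cstep t k true (S (S m)));
            (q * / INR (S m) * (1 - p), cstep t k false (S (S m))) ])
          (seq 0 (S m))) q t) (cdist p m)).
  apply Ex_flat_map. intros q t.
  rewrite Ex_flat_pair.
  rewrite <- lsum_scal, <- lsum_scal. apply lsum_ext. intros; ring.
Qed.

Lemma Ex_netdist_S p m F : Ex (netdist p (S m)) F =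
  Ex (netdist p m) (fun g => / INR (S m) * lsum (seq 0 (S m))
      (fun k => p * F (grow g k true (S (S m))) + (1 - p) * F (grow g k false (S (S m))))).
Proof.
  change (netdist p (S m)) with (flat_map (fun qt : R * network =>
        let (q, t) := qt in
        (fun q g => flat_map (fun k : nat =>
          [ (q * / INR (S m) * p, grow g k true (S (S m)));
            (q * / INR (S m) * (1 - p), grow g k false (S (S m))) ])
          (seq 0 (S m))) q t) (netdist p m)).
  apply Ex_flat_map. intros q t.
  rewrite Ex_flat_pair.
  rewrite <- lsum_scal, <- lsum_scal. apply lsum_ext. intros; ring.
Qed.

Lemma net_cd p m F : Ex (netdist p m) F = Ex (cdist p m) (fun s => F (gof s)).
Proof.
  revert F; induction m as [|m IH]; intros F; [reflexivity|].
  rewrite Ex_netdist_S, IH, Ex_cdist_S. reflexivity.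
Qed.

Definition Inv (m : nat) (s : st) : Prop :=
  Permutation (pof s) (seq 0 (S m)) /\
  gof s = map (fun l => nth l (hof s) d0) (pof s) /\
  Real (tof s) 0 1 (hof s) /\
  tsize (tof s) = S m /\
  (forall v, In v (verts (hof s)) -> (v <= S m)%nat).

Lemma Inv_step m s k b : Inv m s -> (k < S m)%nat -> Inv (S m) (cstep s k b (S (S m))).
Proof.
  destruct s as [[[g h] t] pi]. unfold Inv, cstep, gof, hof, tof, pof; cbn [fst snd].
  intros [Hp [Hg [HR [Ht Hv]]]] Hk.
  destruct (Real_props _ _ _ _ HR) as [_ [_ [_ [_ Hlen]]]].
  assert (Hlp : length pi = S m) by (rewrite (Permutation_length Hp), length_seq; reflexivity).
  set (j := nth k pi 0%nat).
  assert (Hjin : In j pi) by (apply nth_In; lia).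
  assert (Hj : (j < S m)%nat).
  { apply (Permutation_in _ Hp) in Hjin. apply in_seq in Hjin. lia. }
  assert (Hpi_lt : forall l, In l pi -> (l < S m)%nat).
  { intros l Hl. apply (Permutation_in _ Hp) in Hl. apply in_seq in Hl. lia. }
  assert (Hek : nth k g d0 = nth j h d0).
  { rewrite Hg. rewrite nth_indep with (d' := (fun l => nth l h d0) 0%nat) by (rewrite length_map; lia).
    rewrite (map_nth (fun l => nth l h d0)). reflexivity. }
  assert (HND : NoDup pi) by (eapply Permutation_NoDup; [apply Permutation_sym; exact Hp| apply seq_NoDup]).
  assert (Hsplit : pi = firstn k pi ++ j :: skipn (S k) pi) by (apply split_nth; lia).
  repeat split.
  -
    unfold pupd. destruct b.
    + eapply perm_trans. { apply perm_skip. apply Permutation_map. exact Hp. }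
      apply perm_par. exact Hj.
    + apply perm_ser; [exact Hj|].
      apply (Permutation_app_inv _ _ _ _ j).
      rewrite <- Hsplit. rewrite <- seq_split by exact Hj. exact Hp.
  -
    unfold pupd, grow. change (0%nat, 1%nat) with d0. rewrite Hek. fold j. destruct b.
    + cbn [map]. rewrite hgrow_nth_j by lia. f_equal.
      rewrite map_map. rewrite Hg at 1. apply map_ext_in. intros l Hl.
      destruct (Nat.eq_dec l j) as [->|Hne].
      * unfold bump. rewrite Nat.ltb_irrefl. rewrite hgrow_nth_Sj by lia. reflexivity.
      * rewrite hgrow_nth_other; auto; try lia. apply Hpi_lt in Hl. lia.
    + cbn [map]. rewrite hgrow_nth_j, hgrow_nth_Sj by lia. f_equal. f_equal.
      rewrite map_map. rewrite Hg. rewrite firstn_map, skipn_map, <- map_app.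
      apply map_ext_in. intros l Hl.
      assert (Hne : l <> j).
      { intros ->. rewrite Hsplit in HND. apply NoDup_remove_2 in HND. contradiction. }
      assert (Hl2 : In l pi).
      { rewrite Hsplit. apply in_app_iff in Hl. apply in_app_iff. simpl. tauto. }
      rewrite hgrow_nth_other; auto; try lia. apply Hpi_lt in Hl2. lia.
  - apply Real_grow; auto; try lia.
    intros Hz. apply Hv in Hz. lia.
  - rewrite tsize_grow, Ht. reflexivity.
  - intros v Hin. apply verts_hgrow in Hin; [|lia].
    destruct Hin as [->|Hin]; [lia|]. apply Hv in Hin. lia.
Qed.

Lemma cdist_inv p m : forall qs, In qs (cdist p m) -> Inv m (snd qs).
Proof.
  induction m as [|m IH]; intros qs H.
  - simpl in H. destruct H as [H|[]]. subst qs. unfold Inv; cbn.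
    repeat split; auto.
    + constructor. lia.
    + intros v [H|[H|[]]]; lia.
  - apply in_flat_map in H. destruct H as [[q s] [Hs H]].
    apply in_flat_map in H. destruct H as [k [Hk H]]. apply in_seq in Hk.
    apply IH in Hs. cbn [snd] in Hs.
    destruct H as [H|[H|[]]]; subst qs; cbn [snd]; apply Inv_step; auto; lia.
Qed.

Lemma lsum_nth_perm (pi : list nat) n G : Permutation pi (seq 0 n) ->
  lsum (seq 0 n) (fun k => G (nth k pi 0%nat)) = lsum (seq 0 n) G.
Proof.
  intros Hp. assert (Hl : length pi = n) by (rewrite (Permutation_length Hp), length_seq; reflexivity).
  rewrite <- (lsum_map (seq 0 n) (fun k => nth k pi 0%nat) G).
  rewrite <- Hl at 1. rewrite map_nth_seq. apply lsum_perm. exact Hp.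
Qed.

Lemma cd_td p m F : Ex (cdist p m) (fun s => F (tof s)) = Ex (tdist p m) F.
Proof.
  revert F; induction m as [|m IH]; intros F; [reflexivity|].
  rewrite Ex_cdist_S, Ex_tdist_S, <- IH.
  apply Ex_ext. intros [q s] Hs. apply cdist_inv in Hs. cbn [snd] in Hs |- *.
  destruct Hs as [Hp _]. unfold W, cstep, tof at 1 2; cbn [fst snd].
  f_equal.
  apply (lsum_nth_perm (pof s) (S m) (fun j => p * F (tgrow (tof s) j true) + (1 - p) * F (tgrow (tof s) j false))).
  exact Hp.
Qed.

Lemma fold_perm {A B} (f : A -> B -> B) z l l' :
  (forall a b c, f a (f b c) = f b (f a c)) -> Permutation l l' -> fold_right f z l = fold_right f z l'.
Proof.
  intros Hc. induction 1; simpl; auto; try congruence.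
Qed.

Lemma npaths_perm h h' : Permutation h h' -> forall f v, npaths f v h = npaths f v h'.
Proof.
  intros Hp f. induction f as [|f IH]; intros v; [reflexivity|].
  rewrite !npaths_S. destruct (Nat.eqb v 1); [reflexivity|].
  unfold Out.
  transitivity (fold_right (fun e acc => if Nat.eqb (fst e) v then (npaths f (snd e) h' + acc)%nat else acc) 0%nat h).
  - generalize h at 2 3. intros l. induction l as [|e l IHl]; [reflexivity|].
    simpl. rewrite IHl, IH. reflexivity.
  - apply fold_perm; [|exact Hp]. intros a b c.
    destruct (Nat.eqb (fst a) v), (Nat.eqb (fst b) v); lia.
Qed.

Lemma P_tv p m s : In s (cdist p m) -> INR (P (gof (snd s))) = tv (tof (snd s)).
Proof.
  intros Hs. apply cdist_inv in Hs. destruct (snd s) as [[[g h] t] pi].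
  unfold Inv, gof, hof, tof, pof in *; cbn [fst snd] in *.
  destruct Hs as [Hp [Hg [HR [Ht _]]]].
  destruct (Real_props _ _ _ _ HR) as [_ [_ [_ [_ Hlen]]]].
  assert (Hgh : Permutation g h).
  { rewrite Hg. apply perm_trans with (map (fun l => nth l h d0) (seq 0 (length h))).
    - apply Permutation_map. rewrite Hlen, Ht. exact Hp.
    - rewrite map_nth_seq. apply Permutation_refl. }
  unfold P, tv. f_equal. rewrite (Permutation_length Hgh).
  rewrite (npaths_perm _ _ Hgh). apply Real_paths. exact HR.
Qed.

Lemma EP_ee p n : EP p (S n) = ee p n.
Proof.
  change (EP p (S n)) with (Ex (netdist p (S n - 1)) (fun g => INR (P g))).
  replace (S n - 1)%nat with n by lia.
  rewrite net_cd. unfold ee. rewrite <- cd_td.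
  apply Ex_ext. intros s Hs. apply (P_tv p n s Hs).
Qed.

Lemma sum_lsum f m : sum_f_R0 f m = lsum (seq 0 (S m)) f.
Proof.
  induction m as [|m IH]; [simpl; ring|].
  rewrite lsum_seqS. simpl sum_f_R0. rewrite IH. reflexivity.
Qed.

Lemma EP_1 p : EP p 1 = 1.
Proof. rewrite (EP_ee p 0). apply ee_0. Qed.

Lemma EP_rec p n : (2 <= n)%nat ->
     EP p n = 2 * p / INR (n - 1) * sum_f 1 (n - 1) (fun k => EP p k)
            + (1 - p) / INR (n - 1) * sum_f 1 (n - 1) (fun k => EP p k * EP p (n - k)).
Proof.
  intros Hn. destruct n as [|[|n]]; [lia|lia|].
  replace (S (S n) - 1)%nat with (S n) by lia.
  rewrite EP_ee, ee_rec. unfold sum_f. replace (S n - 1)%nat with n by lia.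
  rewrite !sum_lsum.
  rewrite (lsum_ext _ (fun x => EP p (x + 1)) (ee p)).
  2:{ intros x _. rewrite Nat.add_1_r. apply EP_ee. }
  rewrite (lsum_ext _ (fun x => EP p (x + 1) * EP p (S (S n) - (x + 1))) (fun k => ee p k * ee p (n - k))).
  2:{ intros x Hx. apply in_seq in Hx. rewrite Nat.add_1_r.
      replace (S (S n) - S x)%nat with (S (n - x)) by lia. rewrite !EP_ee. reflexivity. }
  unfold Rdiv. ring.
Qed.

Lemma ee_nonneg_bound p : 0 < p < 1 -> forall m, 0 <= ee p m <= 2 ^ m.
Proof.
  intros hp m. induction m as [m IH] using (well_founded_induction lt_wf).
  destruct m as [|n]; [rewrite ee_0; simpl; lra|].
  rewrite ee_rec.
  assert (Hb : forall k, In k (seq 0 (S n)) -> 0 <= ee p k <= 2 ^ n).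
  { intros k Hk. apply in_seq in Hk. destruct (IH k ltac:(lia)) as [H1 H2]. split; auto.
    apply Rle_trans with (2 ^ k); auto. apply Rle_pow; lra || lia. }
  assert (Hb2 : forall k, In k (seq 0 (S n)) -> 0 <= ee p k * ee p (n - k) <= 2 ^ n).
  { intros k Hk. apply in_seq in Hk. destruct (IH k ltac:(lia)) as [H1 H2].
    destruct (IH (n - k)%nat ltac:(lia)) as [H3 H4]. split; [nra|].
    replace (2 ^ n) with (2 ^ k * 2 ^ (n - k)) by (rewrite <- pow_add; f_equal; lia).
    apply Rmult_le_compat; auto. }
  assert (Hs : forall (f : nat -> R) B l, (forall k, In k l -> 0 <= f k <= B) ->
     0 <= lsum l f <= INR (length l) * B).
  { intros f B l H. induction l as [|x l IHl]; simpl; [lra|].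
    destruct (H x (or_introl eq_refl)) as [Hx1 Hx2]. destruct IHl as [Hl1 Hl2]; [intros; apply H; right; auto|].
    destruct (length l); simpl in *; nra. }
  destruct (Hs _ _ _ Hb) as [S1 S2]. destruct (Hs _ _ _ Hb2) as [S3 S4].
  rewrite length_seq in S2, S4.
  assert (HI : 0 < INR (S n)) by (apply lt_0_INR; lia).
  assert (Hpos : 0 <= 2 ^ n) by (apply pow_le; lra).
  split.
  - apply Rmult_le_pos; [left; apply Rinv_0_lt_compat; auto| nra].
  - apply Rle_trans with (/ INR (S n) * (INR (S n) * 2 ^ S n)).
    + apply Rmult_le_compat_l; [left; apply Rinv_0_lt_compat; auto|].
      simpl (2 ^ S n). nra.
    + right. field. lra.
Qed.

From Coquelicot Require Import Coquelicot.
Open Scope R_scope.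

Lemma is_derive_mult_R (f g : R -> R) x df dg : is_derive f x df -> is_derive g x dg ->
  is_derive (fun y => f y * g y) x (df * g x + f x * dg).
Proof. intros. apply (is_derive_mult f g); auto. intros; apply Rmult_comm. Qed.

Lemma is_derive_exp_comp (g : R -> R) x dg : is_derive g x dg ->
  is_derive (fun y => exp (g y)) x (dg * exp (g x)).
Proof. intros H. apply (is_derive_comp exp g); auto. apply is_derive_exp. Qed.

Lemma is_derive_minus_cst (f : R -> R) x df k : is_derive f x df ->
  is_derive (fun y => f y - k) x df.
Proof.
  intros H. assert (H2 := is_derive_minus f (fun _ => k) x df zero H (is_derive_const k x)).
  replace df with (minus df zero) by (unfold minus, zero, opp, plus; simpl; ring).
  eapply is_derive_ext; [|exact H2]. intros; reflexivity.
Qed.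

Lemma rad_bound (u : nat -> R) M : (forall n, Rabs (u n) <= M * 2^n) -> Rbar_le (Finite (1/3)) (CV_radius u).
Proof.
  intros H. apply (proj1 (Lub_Rbar_correct (CV_disk u))).
  unfold CV_disk. apply (@ex_series_le R_AbsRing R_CompleteNormedModule _ (fun n => M * (2/3)^n)).
  - intros n. change (norm (Rabs (u n * (1/3)^n))) with (Rabs (Rabs (u n * (1/3)^n))).
    rewrite Rabs_Rabsolu, Rabs_mult. rewrite (Rabs_pos_eq ((1/3)^n)) by (apply pow_le; lra).
    replace ((2/3)^n) with (2^n * (1/3)^n) by (rewrite <- Rpow_mult_distr; f_equal; lra).
    rewrite <- Rmult_assoc. apply Rmult_le_compat_r; [apply pow_le; lra| apply H].
  - apply (ex_series_ext (fun n => scal M ((2/3)^n))). { intros; reflexivity. }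
    apply (@ex_series_scal R_AbsRing R_CompleteNormedModule). apply ex_series_geom. rewrite Rabs_pos_eq; lra.
Qed.

Lemma in_rad (u : nat -> R) M z : (forall n, Rabs (u n) <= M * 2^n) -> Rabs z < 1/3 ->
  Rbar_lt (Rabs z) (CV_radius u).
Proof.
  intros H Hz. eapply Rbar_lt_le_trans; [|apply (rad_bound u M H)]. simpl. exact Hz.
Qed.

Lemma const_lemma (S A Den S' Den' : R -> R) (kap c r z : R) :
  0 < r -> Rabs z < r ->
  (forall t, Rabs t < r -> is_derive S t (S' t) /\ is_derive A t (S t) /\ is_derive Den t (Den' t)
      /\ S' t * Den t + S t * Den' t = c * S t * (S t * Den t - kap)) ->
  S 0 * Den 0 = kap -> S z * Den z = kap.
Proof.
  intros Hr Hz Hd H0.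
  set (phi := fun t => (S t * Den t - kap) * exp (- c * A t)).
  assert (Hphi : forall t, Rabs t < r -> is_derive phi t 0).
  { intros t Ht. destruct (Hd t Ht) as [HS [HA [HD Hid]]].
    assert (H1 := is_derive_minus_cst _ t _ kap (is_derive_mult_R S Den t _ _ HS HD)).
    assert (H2 := is_derive_exp_comp (fun y => - c * A y) t _ (is_derive_scal A t (- c) _ HA)).
    assert (H3 := is_derive_mult_R _ _ t _ _ H1 H2).
    replace 0 with ((S' t * Den t + S t * Den' t) * exp (- c * A t) +
       (S t * Den t - kap) * (- c * S t * exp (- c * A t))).
    - exact H3.
    - rewrite Hid. ring. }
  assert (Hphi0 : phi 0 = 0) by (unfold phi; rewrite H0; ring).
  assert (Hz0 : phi z = 0).
  { destruct (Rtotal_order z 0) as [Hlt|[Heq|Hgt]].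
    - rewrite <- Hphi0. apply eq_is_derive; [|exact Hlt].
      intros t Ht. apply Hphi. apply Rabs_def1; [|]; apply Rabs_def2 in Hz; lra.
    - subst z. exact Hphi0.
    - rewrite <- Hphi0. symmetry. apply eq_is_derive; [|exact Hgt].
      intros t Ht. apply Hphi. apply Rabs_def1; apply Rabs_def2 in Hz; lra. }
  unfold phi in Hz0. apply Rmult_integral in Hz0. destruct Hz0 as [Hz0|Hz0].
  - lra.
  - exfalso. pose proof (exp_pos (- c * A z)). lra.
Qed.

Section S.
Variable p : R.
Hypothesis hp : 0 < p < 1.

Let a := ee p.
Let c := fun n => sum_f_R0 a n.

Lemma a_bound n : Rabs (a n) <= 1 * 2 ^ n.
Proof.
  unfold a. destruct (ee_nonneg_bound p hp n). rewrite Rabs_pos_eq by lra. lra.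
Qed.

Lemma c_bound n : Rabs (c n) <= 2 * 2 ^ n.
Proof.
  assert (H : 0 <= c n <= 2 * 2 ^ n - 1).
  { induction n as [|n IH]; unfold c in *; simpl sum_f_R0.
    - destruct (ee_nonneg_bound p hp 0). unfold a. simpl in *. lra.
    - destruct (ee_nonneg_bound p hp (S n)). unfold a in *. simpl in *. lra. }
  rewrite Rabs_pos_eq by lra. lra.
Qed.

Lemma rec_ps n : PS_derive a n = 2 * p * c n + (1 - p) * PS_mult a a n.
Proof.
  unfold PS_derive, PS_mult, c, a. rewrite ee_rec. rewrite !sum_lsum.
  field. apply not_0_INR. lia.
Qed.

Lemma HS t : Rabs t < 1/3 ->
  is_derive (PSeries a) t (2 * p * PSeries c t + (1 - p) * (PSeries a t * PSeries a t)).
Proof.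
  intros Ht.
  assert (Ra := in_rad a 1 t a_bound Ht).
  assert (Rc := in_rad c 2 t c_bound Ht).
  assert (E : PSeries (PS_derive a) t = 2 * p * PSeries c t + (1 - p) * (PSeries a t * PSeries a t)).
  { apply is_pseries_unique.
    apply (is_pseries_ext (PS_plus (PS_scal (2 * p) c) (PS_scal (1 - p) (PS_mult a a)))).
    { intros n. rewrite rec_ps. reflexivity. }
    apply (@is_pseries_plus R_AbsRing R_NormedModule).
    - apply (@is_pseries_scal R_AbsRing R_NormedModule). { apply Rmult_comm. }
      apply PSeries_correct. apply CV_radius_inside. exact Rc.
    - apply (@is_pseries_scal R_AbsRing R_NormedModule). { apply Rmult_comm. }
      apply is_pseries_mult; auto; apply PSeries_correct; apply CV_radius_inside; exact Ra. }
  rewrite <- E. apply is_derive_PSeries. exact Ra.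
Qed.

Lemma HC t : Rabs t < 1/3 -> PSeries c t * (1 - t) = PSeries a t.
Proof.
  intros Ht.
  assert (Rc := in_rad c 2 t c_bound Ht).
  assert (Hc : is_pseries c t (PSeries c t)) by (apply PSeries_correct; apply CV_radius_inside; exact Rc).
  assert (H2 := @is_pseries_minus R_AbsRing R_NormedModule _ _ _ _ _ Hc
                  (@is_pseries_incr_1 R_AbsRing R_NormedModule _ _ _ Hc)).
  symmetry. apply is_pseries_unique.
  replace (PSeries c t * (1 - t)) with (plus (PSeries c t) (opp (scal t (PSeries c t)))).
  - eapply is_pseries_ext; [|exact H2].
    intros n. unfold PS_minus, PS_incr_1. destruct n as [|n].
    + unfold c. simpl. unfold plus, opp, zero; simpl. ring.
    + unfold c. simpl. unfold plus, opp; simpl. ring.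
  - unfold plus, opp, scal; simpl. unfold mult; simpl. ring.
Qed.

Lemma HA t : Rabs t < 1/3 -> is_derive (PSeries (PS_Int a)) t (PSeries a t).
Proof.
  intros Ht.
  assert (Ra := in_rad a 1 t a_bound Ht).
  assert (E : PSeries (PS_derive (PS_Int a)) t = PSeries a t).
  { apply PSeries_ext. intros n. unfold PS_derive, PS_Int. field. apply not_0_INR. lia. }
  rewrite <- E. apply is_derive_PSeries. rewrite CV_radius_Int. exact Ra.
Qed.

Lemma S0 : PSeries a 0 = 1.
Proof. rewrite PSeries_0. unfold a. apply ee_0. Qed.

Lemma gen_fun z : Rabs z < 1/4 -> PSeries a z = Egf p z.
Proof.
  intros Hz. unfold Egf. destruct (Req_EM_T p (1/2)) as [Hp|Hp].
  - assert (K : PSeries a z * (2 * (1 - z) - (1 - z) * ln (1 / (1 - z))) = 2).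
    { apply (const_lemma (PSeries a) (PSeries (PS_Int a)) (fun t => 2 * (1 - t) - (1 - t) * ln (1 / (1 - t)))
        (fun t => 2 * p * PSeries c t + (1 - p) * (PSeries a t * PSeries a t))
        (fun t => -3 + ln (1 / (1 - t))) 2 (1 - p) (1/4) z); [lra|exact Hz| |].
      - intros t Ht. assert (Ht3 : Rabs t < 1/3) by lra.
        assert (Ht1 : 0 < 1 - t) by (apply Rabs_def2 in Ht; lra).
        split; [apply HS; exact Ht3|]. split; [apply HA; exact Ht3|]. split.
        + auto_derive.
          * repeat split; try lra. apply Rmult_lt_0_compat; [lra| apply Rinv_0_lt_compat; lra].
          * replace (1 * / (1 + - t)) with (1 / (1 - t)) by (field; lra).
            field. lra.
        + rewrite <- (HC t Ht3). subst p. field.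
      - rewrite S0. replace (1 / (1 - 0)) with 1 by field. rewrite ln_1. ring. }
    assert (D : 2 * (1 - z) - (1 - z) * ln (1 / (1 - z)) <> 0).
    { intros D. rewrite D in K. lra. }
    apply (Rmult_eq_reg_r (2 * (1 - z) - (1 - z) * ln (1 / (1 - z)))); [|exact D].
    rewrite K. field. exact D.
  - assert (K : PSeries a z * ((1 - p) * (1 - z) - p * Rpower (1 - z) (2 * p)) = 1 - 2 * p).
    { apply (const_lemma (PSeries a) (PSeries (PS_Int a)) (fun t => (1 - p) * (1 - t) - p * Rpower (1 - t) (2 * p))
        (fun t => 2 * p * PSeries c t + (1 - p) * (PSeries a t * PSeries a t))
        (fun t => - (1 - p) + 2 * p * p * Rpower (1 - t) (2 * p) / (1 - t)) (1 - 2 * p) (1 - p) (1/4) z);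
        [lra|exact Hz| |].
      - intros t Ht. assert (Ht3 : Rabs t < 1/3) by lra.
        assert (Ht1 : 0 < 1 - t) by (apply Rabs_def2 in Ht; lra).
        split; [apply HS; exact Ht3|]. split; [apply HA; exact Ht3|]. split.
        + unfold Rpower. auto_derive.
          * repeat split; lra.
          * replace (1 + - t) with (1 - t) by ring. field. lra.
        + rewrite <- (HC t Ht3). field. lra.
      - rewrite S0. unfold Rpower. replace (1 - 0) with 1 by ring. rewrite ln_1, Rmult_0_r, exp_0. ring. }
    assert (D : (1 - p) * (1 - z) - p * Rpower (1 - z) (2 * p) <> 0).
    { intros D. rewrite D in K. assert (1 - 2 * p <> 0) by (intros E; apply Hp; lra). lra. }
    apply (Rmult_eq_reg_r ((1 - p) * (1 - z) - p * Rpower (1 - z) (2 * p))); [|exact D].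
    rewrite K. field. exact D.
Qed.

Lemma series_ok z : Rabs z < 1/4 -> infinite_sum (fun m => EP p (S m) * z ^ m) (Egf p z).
Proof.
  intros Hz. rewrite <- (gen_fun z Hz). apply is_series_Reals.
  apply (is_series_ext (fun m => a m * z ^ m)).
  { intros m. unfold a. rewrite EP_ee. reflexivity. }
  apply is_pseries_R. apply PSeries_correct. apply CV_radius_inside.
  apply (in_rad a 1 z a_bound). lra.
Qed.
End S.


Theorem mainTheorem4 (p : R) (hp : 0 < p < 1) :
  EP p 1 = 1 /\
  (forall n : nat, (2 <= n)%nat ->
     EP p n = 2 * p / INR (n - 1) * sum_f 1 (n - 1) (fun k => EP p k)
            + (1 - p) / INR (n - 1) * sum_f 1 (n - 1) (fun k => EP p k * EP p (n - k))) /\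
  (exists r : R, 0 < r /\ forall z : R, Rabs z < r ->
     infinite_sum (fun m : nat => EP p (S m) * z ^ m) (Egf p z)).
Proof.
  split; [apply EP_1|]. split.
  - intros n Hn. apply EP_rec. exact Hn.
  - exists (1/4). split; [lra|]. intros z Hz. apply series_ok; auto.
Qed.
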